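(* Let $p\ge1$, $m\in\mathbb{N}$, $a,b>0$, $\beta\in\mathbb{R}^p$, and let $\xi$ be a design on $\mathcal{X}$. Then the Poisson–Gamma information matrix $M(\xi;\beta)$ and the Poisson information matrix $M_{Po}(\xi;\beta)$ have the same rank.
   Context: Let $\mathcal{X}\subseteq\mathbb{R}^k$ be a design region and $f=(1,f_1,\ldots,f_{p-1})^T:\mathcal{X}\to\mathbb{R}^p$ a vector of regression functions whose first component is the constant 1. A design $\xi$ is a probability measure on $\mathcal{X}$ with finite support $x_1,\ldots,x_l$ and weights $w_1,\ldots,w_l\ge0$, $\sum_j w_j=1$. The Poisson information matrix is $M_{Po}(\xi;\beta)=\sum_{j=1}^l w_j\exp(f(x_j)^T\beta)f(x_j)f(x_j)^T$, and the Poisson–Gamma information matrix is $M(\xi;\beta)=\frac{a}{b}\Bigl(M_{Po}(\xi;\beta)-\frac{M_{Po}(\xi;\beta)e_1e_1^TM_{Po}(\xi;\beta)}{e_1^TM_{Po}(\xi;\beta)e_1+b/m}\Bigr)$, where $e_1$ is the first standard unit vector of $\mathbb{R}^p$. *)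

(* Defs.v *)
From HB Require Import structures.
From mathcomp Require Import all_boot all_order all_algebra.
From mathcomp Require Import reals.
From mathcomp Require Import sequences exp.
Set Implicit Arguments. Unset Strict Implicit. Unset Printing Implicit Defensive.
Import Order.TTheory GRing.Theory Num.Theory.
Local Open Scope ring_scope.

Definition e1 (R : nzRingType) (p : nat) (hp : (0 < p)%N) : 'cV[R]_p :=
  delta_mx (Ordinal hp) 0.

Definition MPo (R : realType) (k p l : nat) (f : 'rV[R]_k -> 'cV[R]_p)
  (x : 'I_l -> 'rV[R]_k) (w : 'I_l -> R) (beta : 'cV[R]_p) : 'M[R]_p :=
  \sum_(j < l) (w j * expR (((f (x j))^T *m beta) 0 0))
                  *: (f (x j) *m (f (x j))^T).

Definition MPG (R : realType) (k p l : nat) (hp : (0 < p)%N) (a b : R) (m : nat)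
  (f : 'rV[R]_k -> 'cV[R]_p) (x : 'I_l -> 'rV[R]_k) (w : 'I_l -> R)
  (beta : 'cV[R]_p) : 'M[R]_p :=
  let M := MPo f x w beta in
  let e := e1 R hp in
  (a / b) *: (M - (((e^T *m M *m e) 0 0 + b / m%:R)^-1
                     *: (M *m e *m e^T *m M))).

(* Main.v *)
Require Import Defs.
From HB Require Import structures.
From mathcomp Require Import all_boot all_order all_algebra.
From mathcomp Require Import reals.
From mathcomp Require Import sequences exp.
From mathcomp Require Import zify ring.
Import Order.TTheory GRing.Theory Num.Theory.
Local Open Scope ring_scope.

Lemma rank_eq_ker (R : fieldType) n (A B : 'M[R]_n) :
  (forall v : 'rV_n, v *m A = 0 -> v *m B = 0) ->
  (forall v : 'rV_n, v *m B = 0 -> v *m A = 0) -> \rank A = \rank B.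
Proof.
move=> AB BA.
have H : forall C D : 'M[R]_n, (forall v : 'rV_n, v *m C = 0 -> v *m D = 0) ->
   (kermx C <= kermx D)%MS.
  move=> C D CD; rewrite sub_kermx; apply/eqP/row_matrixP => i.
  rewrite row_mul CD ?row0 //.
  by rewrite -row_mul mulmx_ker row0.
have h1 := mxrankS (H _ _ AB); have h2 := mxrankS (H _ _ BA).
rewrite !mxrank_ker in h1 h2.
have := rank_leq_row A; have := rank_leq_row B. lia.
Qed.

Lemma quad_e (R : nzRingType) p (hp : (0 < p)%N) (A : 'M[R]_p) :
  ((e1 R hp)^T *m A *m e1 R hp) 0 0 = A (Ordinal hp) (Ordinal hp).
Proof. by rewrite /e1 trmx_delta -rowE -colE !mxE. Qed.

Theorem lemma1 (R : realType) (k p : nat) (hp : (0 < p)%N)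
  (X : 'rV[R]_k -> Prop) (f : 'rV[R]_k -> 'cV[R]_p)
  (hf1 : forall z, f z (Ordinal hp) 0 = 1)
  (m : nat) (hm : (0 < m)%N) (a b : R) (ha : 0 < a) (hb : 0 < b)
  (beta : 'cV[R]_p)
  (l : nat) (x : 'I_l -> 'rV[R]_k) (w : 'I_l -> R)
  (hxX : forall j, X (x j)) (hw0 : forall j, 0 <= w j)
  (hw1 : \sum_(j < l) w j = 1) :
  \rank (MPG hp a b m f x w beta) = \rank (MPo f x w beta).
Proof.
rewrite /MPG.
set M := MPo f x w beta; set e := e1 R hp.
set s := (e^T *m M *m e) 0 0.
have s0 : 0 <= s.
  rewrite /s quad_e /M /MPo summxE; apply: sumr_ge0 => j _.
  rewrite !mxE; apply: mulr_ge0; first by apply: mulr_ge0 => //; apply: expR_ge0.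
  apply: sumr_ge0 => i _; rewrite [X in _ * X]mxE -expr2; exact: sqr_ge0.
set t := b / m%:R.
have t0 : 0 < t by apply: divr_gt0 => //; rewrite ltr0n.
have st : s + t != 0 by apply: lt0r_neq0; apply: ltr_wpDl.
have ab : a / b != 0 by apply: lt0r_neq0; apply: divr_gt0.
set g := (s + t)^-1.
have key : forall v : 'rV_p, v *m (M - g *: (M *m e *m e^T *m M)) = 0 -> v *m M = 0.
  move=> v /eqP; rewrite mulmxBr subr_eq0 => /eqP H.
  set q := (v *m M *m e) 0 0.
  have Hq : v *m M *m e = q%:M by apply: mx11_scalar.
  have H2 : v *m M = (g * q) *: (e^T *m M).
    by rewrite H -scalemxAr !mulmxA Hq -mulmxA mul_scalar_mx scalerA mulrC.
  have H3 : q = g * q * s.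
    by rewrite {1}/q H2 -!scalemxAl mxE /s.
  have q0 : q = 0.
    have : q * (s + t) = q * s by rewrite {1}H3 /g; field.
    move/eqP; rewrite mulrDr -subr_eq0 addrAC subrr add0r mulf_eq0.
    by rewrite (negbTE (lt0r_neq0 t0)) orbF => /eqP.
  by rewrite H2 q0 mulr0 scale0r.
apply: rank_eq_ker => v.
- rewrite -scalemxAr => /eqP; rewrite scaler_eq0 (negbTE ab) /= => /eqP.
  exact: key.
- move=> H; rewrite -scalemxAr mulmxBr -scalemxAr !mulmxA H.
  by rewrite !mul0mx scaler0 subrr scaler0.
Qed.
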